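(* In Ruleset C, for a superposition of $\ell$ distinct single Nim heaps with $k=\max_{1\le j\le\ell} i_j$, \[\langle \mathrm{Nim}(i_1),\ldots,\mathrm{Nim}(i_\ell)\rangle_C\equiv\begin{cases} *k & \text{if } \ell=1,\\ *(k-1) & \text{otherwise.}\end{cases}\]
   Context: Single-heap Nim: $\mathrm{Nim}(x)$ is a heap of $x$ tokens; classical move $(1,-j)$, $j\ge1$, removes $j$ tokens and is illegal if fewer than $j$ tokens remain. Quantum variation: a position is a nonempty finite set $\langle G_1,\ldots,G_n\rangle$ of distinct classical positions; a classical move is legal if legal in some $G_i$; a Q-move is a nonempty set of legal classical moves, leading to the superposition (set) of all legal results of applying one of its moves to one of the $G_i$. Ruleset C (subscript $C$): Q-moves of at least two distinct classical moves are allowed; an unsuperposed (single) move is allowed if and only if it is legal in every $G_i$ of the superposition. The player with no allowed Q-move loses. $\equiv$ is game equivalence, $*k$ the value of a classical Nim heap of $k$ tokens. *)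

(* Defs.v *)
From mathcomp Require Import all_boot.
Set Implicit Arguments. Unset Strict Implicit. Unset Printing Implicit Defensive.

Inductive game : Type := Game : seq game -> game.

Definition opts (g : game) : seq game := let: Game l := g in l.

Definition game0 : game := Game [::].

(** A disjunctive sum is a list of components; a move replaces one component
    by one of its options. *)
Definition sum_move (s t : seq game) : Prop :=
  exists2 i, i < size s & exists2 j, j < size (opts (nth game0 s i)) &
    t = set_nth game0 s i (nth game0 (opts (nth game0 s i)) j).

Inductive ppos : seq game -> Prop :=
  PPos s : (forall t, sum_move s t -> exists2 u, sum_move t u & ppos u) -> ppos s.

(** Game equivalence: same outcome in every (impartial) context. For impartial
    games the outcome is determined by being a P-position or not. *)
Definition game_equiv (G H : game) : Prop :=
  forall X : game, ppos [:: G; X] <-> ppos [:: H; X].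

(** Classical Nim heaps: nims n = [:: *0; ...; *(n-1)], nim k = *k. *)
Fixpoint nims (n : nat) : seq game :=
  match n with 0 => [::] | n'.+1 => rcons (nims n') (Game (nims n')) end.
Definition nim (k : nat) : game := Game (nims k).

(* A superposition of single Nim heaps is a nonempty set of heap sizes,
   represented by a duplicate-free seq nat. *)
Definition qmax (S : seq nat) : nat := foldr maxn 0 S.

Fixpoint subseqs (s : seq nat) : seq (seq nat) :=
  match s with
  | [::] => [:: [::]]
  | x :: s' => let r := subseqs s' in map (cons x) r ++ r
  end.

(* candidate Q-moves: nonempty sets M of classical moves j (remove j tokens),
   each legal in some heap of S, i.e. 1 <= j <= max S *)
Definition qmoves (S : seq nat) : seq (seq nat) :=
  [seq M <- subseqs (iota 1 (qmax S)) | M != [::]].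

(* Ruleset C: at least two distinct moves, or a single move legal in every G_i *)
Definition allowedC (S M : seq nat) : bool :=
  (1 < size M) || ((size M == 1) && all (fun x => head 0 M <= x) S).

Definition qresult (S M : seq nat) : seq nat :=
  sort leq (undup (flatten [seq [seq x - j | j <- M & j <= x] | x <- S])).

Fixpoint qgame_fuel (fuel : nat) (S : seq nat) : game :=
  match fuel with
  | 0 => Game [::]
  | f.+1 => Game [seq qgame_fuel f (qresult S M) | M <- qmoves S & allowedC S M]
  end.

(* enough fuel: the maximum heap strictly decreases along any Q-move *)
Definition qgameC (S : seq nat) : game := qgame_fuel (qmax S).+1 S.

(* Main.v *)
Require Import Defs.
From mathcomp Require Import all_boot.
From mathcomp Require Import zify.
Set Implicit Arguments. Unset Strict Implicit. Unset Printing Implicit Defensive.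

Fixpoint depth (g : game) : nat := let: Game l := g in (foldr maxn 0 (map depth l)).+1.
Definition mex (s : seq nat) := find (fun n => n \notin s) (iota 0 (size s).+1).
Fixpoint sg (g : game) : nat := let: Game l := g in mex (map sg l).
Definition opt (g : game) j := nth game0 (opts g) j.

Lemma qmax_ub S x : x \in S -> x <= qmax S.
Proof.
elim: S => //= y S IH; rewrite in_cons => /orP [/eqP->|/IH h].
  exact: leq_maxl.
exact: leq_trans h (leq_maxr _ _).
Qed.

Lemma qmax_cons y S : qmax (y :: S) = maxn y (qmax S).
Proof. by []. Qed.

Lemma qmax_mem S : S != [::] -> qmax S \in S.
Proof.
elim: S => // y S IH _; rewrite in_cons qmax_cons.
case: S IH => [|z S] IH; first by rewrite /= maxn0 eqxx.
have /IH h : z :: S != [::] by [].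
case: (leqP y (qmax (z :: S))) => hh.
  by rewrite h orbT.
by rewrite eqxx.
Qed.

Lemma qmax_le S n : (forall x, x \in S -> x <= n) -> qmax S <= n.
Proof.
elim: S => //= y S IH h; rewrite geq_max h ?mem_head //=.
by apply: IH => x hx; apply: h; rewrite in_cons hx orbT.
Qed.

Lemma qmax_eq S t : t \in S -> (forall x, x \in S -> x <= t) -> qmax S = t.
Proof. by move=> ht h; apply/eqP; rewrite eqn_leq qmax_le // qmax_ub. Qed.

Lemma mex_notin s : mex s \notin s.
Proof.
have hh : has (fun n => n \notin s) (iota 0 (size s).+1).
  apply/negPn/negP => /hasPn hn.
  have sub : {subset iota 0 (size s).+1 <= s}.
    by move=> x hx; have := hn x hx; rewrite negbK.
  by move: (uniq_leq_size (iota_uniq 0 (size s).+1) sub); rewrite size_iota ltnn.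
have hf : find (fun n => n \notin s) (iota 0 (size s).+1) < (size s).+1.
  by rewrite -{2}(size_iota 0 (size s).+1) -has_find.
by have := nth_find 0 hh; rewrite /mex nth_iota // add0n.
Qed.

Lemma mex_lt s m : m < mex s -> m \in s.
Proof.
move=> h; have hle : mex s <= size (iota 0 (size s).+1) by apply: find_size.
have := before_find 0 h; rewrite nth_iota ?add0n; last by rewrite size_iota in hle; exact: leq_trans h hle.
by move/negbFE.
Qed.

Lemma mex_eq s n : n \notin s -> (forall m, m < n -> m \in s) -> mex s = n.
Proof.
move=> hn hm; apply/eqP; rewrite eqn_leq; apply/andP; split.
  by rewrite leqNgt; apply/negP => /mex_lt h; rewrite h in hn.
by rewrite leqNgt; apply/negP => /hm h; move: (mex_notin s); rewrite h.
Qed.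

Lemma sgE g : sg g = mex (map sg (opts g)).
Proof. by case: g. Qed.

Lemma sg_opt_ne g j : j < size (opts g) -> sg (opt g j) != sg g.
Proof.
move=> hj; rewrite (sgE g); apply/eqP => e.
have := mex_notin (map sg (opts g)); rewrite -e /opt -(nth_map game0 0) //.
by rewrite mem_nth // size_map.
Qed.

Lemma sg_opt_ex g m : m < sg g -> exists2 j, j < size (opts g) & sg (opt g j) = m.
Proof.
rewrite sgE => /mex_lt /(nthP 0) [i]; rewrite size_map => hi; rewrite (nth_map game0) // => e.
by exists i.
Qed.

Lemma depth_opt g j : j < size (opts g) -> depth (opt g j) < depth g.
Proof.
case: g => l /= hj; rewrite ltnS /opt /=.
have := @qmax_ub (map depth l) (depth (nth game0 l j)).
rewrite /qmax; apply; rewrite -(nth_map game0 0) // mem_nth // size_map //.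
Qed.

Lemma sum_move2 G X t : sum_move [:: G; X] t ->
  (exists2 j, j < size (opts G) & t = [:: opt G j; X]) \/
  (exists2 j, j < size (opts X) & t = [:: G; opt X j]).
Proof.
case=> i hi [j hj ->]; case: i hi hj => [|[|i]] //= _ hj; [left|right]; by exists j.
Qed.

Lemma sum_moveL G X j : j < size (opts G) -> sum_move [:: G; X] [:: opt G j; X].
Proof. by move=> hj; exists 0 => //; exists j. Qed.

Lemma sum_moveR G X j : j < size (opts X) -> sum_move [:: G; X] [:: G; opt X j].
Proof. by move=> hj; exists 1 => //; exists j. Qed.

Lemma ppos_inv s : ppos s -> forall t, sum_move s t -> exists2 u, sum_move t u & ppos u.
Proof. by case. Qed.

Lemma sg_thm_n n : forall G X, depth G + depth X <= n -> (ppos [:: G; X] <-> sg G = sg X).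
Proof.
elim: n => [|n IH] G X hd.
  by case: G hd => ?; rewrite /= addSn.
have IH' : forall G X, ppos [:: G; X] -> depth G + depth X <= n -> sg G = sg X.
  by move=> G' X' p h; case: (IH _ _ h) => + _; apply.
split.
- move/ppos_inv => hp; apply/eqP; apply/negP => hne.
  case: (ltngtP (sg G) (sg X)) hne => // hlt _.
  + have [j hj e] := sg_opt_ex hlt.
    have [u /sum_move2 [[j' hj' ->]|[j' hj' ->]] pu] := hp _ (sum_moveR G hj).
    * have h2 := depth_opt hj'; have h1 := depth_opt hj.
      have e' := IH' _ _ pu ltac:(lia).
      by move: (sg_opt_ne hj'); rewrite e' e eqxx.
    * have h2 := depth_opt hj'; have h1 := depth_opt hj.
      have e' := IH' _ _ pu ltac:(lia).
      by move: (sg_opt_ne hj'); rewrite -e' e eqxx.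
  + have [j hj e] := sg_opt_ex hlt.
    have [u /sum_move2 [[j' hj' ->]|[j' hj' ->]] pu] := hp _ (sum_moveL X hj).
    * have h2 := depth_opt hj'; have h1 := depth_opt hj.
      have e' := IH' _ _ pu ltac:(lia).
      by move: (sg_opt_ne hj'); rewrite e' e eqxx.
    * have h2 := depth_opt hj'; have h1 := depth_opt hj.
      have e' := IH' _ _ pu ltac:(lia).
      by move: (sg_opt_ne hj'); rewrite -e' e eqxx.
- move=> e; constructor => t /sum_move2 [[j hj ->]|[j hj ->]].
  + have hne := sg_opt_ne hj; have h1 := depth_opt hj.
    case: (ltngtP (sg (opt G j)) (sg X)) => hlt.
    * have [j' hj' e'] := sg_opt_ex hlt; have h2 := depth_opt hj'.
      exists [:: opt G j; opt X j']; first exact: sum_moveR.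
      by apply/IH; [lia|].
    * have [j' hj' e'] := sg_opt_ex hlt; have h2 := depth_opt hj'.
      exists [:: opt (opt G j) j'; X]; first exact: sum_moveL.
      by apply/IH; [lia|].
    * by rewrite hlt e eqxx in hne.
  + have hne := sg_opt_ne hj; have h1 := depth_opt hj.
    case: (ltngtP (sg (opt X j)) (sg G)) => hlt.
    * have [j' hj' e'] := sg_opt_ex hlt; have h2 := depth_opt hj'.
      exists [:: opt G j'; opt X j]; first exact: sum_moveL.
      by apply/IH; [lia|].
    * have [j' hj' e'] := sg_opt_ex hlt; have h2 := depth_opt hj'.
      exists [:: G; opt (opt X j) j']; first exact: sum_moveR.
      by apply/IH; [lia|].
    * by rewrite hlt -e eqxx in hne.
Qed.

Lemma sg_thm G X : ppos [:: G; X] <-> sg G = sg X.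
Proof. exact: (@sg_thm_n (depth G + depth X)). Qed.

Lemma equiv_sg G H : sg G = sg H -> game_equiv G H.
Proof. by move=> e X; rewrite !sg_thm e. Qed.

Lemma map_sg_nims n : map sg (nims n) = iota 0 n.
Proof.
elim: n => // n IH.
have -> : nims n.+1 = rcons (nims n) (Game (nims n)) by [].
rewrite map_rcons IH -addn1 iotaD cats1 add0n; congr rcons.
rewrite /= IH.
by apply: mex_eq => [|m hm]; rewrite mem_iota //= add0n ltnn.
Qed.

Lemma sg_nim n : sg (nim n) = n.
Proof.
rewrite /nim /= map_sg_nims; apply: mex_eq => [|m hm]; by rewrite mem_iota /= ?add0n ?ltnn.
Qed.

Definition v (S : seq nat) := if size S == 1 then qmax S else (qmax S).-1.

Lemma mem_subseqs s M : (M \in subseqs s) = subseq M s.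
Proof.
elim: s M => [|x s IH] M.
  by rewrite subseq0 /= inE.
rewrite /= mem_cat IH.
have inj : injective (cons x) by move=> a b [].
case: M => [|y M]; first by rewrite sub0seq orbT.
case: (eqVneq y x) => [->|ne].
  rewrite (mem_map inj) IH /=.
  apply/orP/idP => [[//|h]|->]; last by left.
  exact: subseq_trans (subseq_cons M x) h.
rewrite /=.
have -> : (y :: M \in [seq x :: i | i <- subseqs s]) = false.
  by apply/negbTE/mapP => -[? _ [e]]; rewrite e eqxx in ne.
by [].
Qed.

Lemma qresultP S M y : y \in qresult S M ->
  exists x j, [/\ x \in S, j \in M, j <= x & y = x - j].
Proof.
rewrite /qresult mem_sort mem_undup => /flatten_mapP [x xS /mapP [j]].
rewrite mem_filter => /andP [jx jM] ->; by exists x, j.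
Qed.

Lemma qresult_in S M x j : x \in S -> j \in M -> j <= x -> x - j \in qresult S M.
Proof.
move=> xS jM jx; rewrite /qresult mem_sort mem_undup; apply/flatten_mapP.
exists x => //; apply/mapP; exists j => //; by rewrite mem_filter jx.
Qed.

Lemma qresult_uniq S M : uniq (qresult S M).
Proof. by rewrite /qresult sort_uniq undup_uniq. Qed.

Lemma two_not1 (R : seq nat) y1 y2 : y1 \in R -> y2 \in R -> y1 != y2 -> size R != 1.
Proof.
case: R => [|z [|w R]] //; rewrite !inE => /eqP-> /eqP->; by rewrite eqxx.
Qed.

Lemma other_elt (S : seq nat) a : uniq S -> S != [::] -> size S != 1 -> exists2 x, x \in S & x != a.
Proof.
case: S => [|y [|z S]] //= /andP [yn _] _ _.
case: (eqVneq y a) => [ea|ne]; last by exists y; rewrite ?mem_head.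
exists z; first by rewrite !inE eqxx orbT.
by apply: contra yn => /eqP ->; rewrite ea !inE eqxx.
Qed.

Lemma all_eq_single (R : seq nat) m : uniq R -> R != [::] -> (forall y, y \in R -> y = m) -> R = [:: m].
Proof.
case: R => [|a [|b R]] //= hu _ h.
  by rewrite (h a (mem_head _ _)).
move: hu; rewrite (h a (mem_head _ _)) (h b); last by rewrite !inE eqxx orbT.
by rewrite !inE eqxx.
Qed.

Lemma v_le R : v R <= qmax R.
Proof. by rewrite /v; case: ifP => // _; exact: leq_pred. Qed.

Lemma qmoves_mem S M : M \in qmoves S -> [/\ M != [::], uniq M & forall j, j \in M -> 1 <= j <= qmax S].
Proof.
rewrite mem_filter mem_subseqs => /andP [ne sub]; split => //.
  exact: subseq_uniq sub (iota_uniq _ _).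
move=> j /(mem_subseq sub); rewrite mem_iota; lia.
Qed.

Lemma two_elts (R : seq nat) y1 y2 : y1 \in R -> y2 \in R -> y1 != y2 -> size R != 1 /\ 0 < qmax R.
Proof.
move=> h1 h2 ne; split; first exact: two_not1 h1 h2 ne.
have := qmax_ub h1; have := qmax_ub h2; lia.
Qed.

Lemma main f : forall S, S != [::] -> uniq S -> qmax S < f -> sg (qgame_fuel f S) = v S.
Proof.
elim: f => [|f IH] S ne u lt //.
have kS : qmax S \in S := qmax_mem ne.
have ub : forall x, x \in S -> x <= qmax S := fun x h => qmax_ub h.
set k := qmax S in kS ub lt *.
have Rfacts : forall M, M \in qmoves S ->
    [/\ qresult S M != [::], qmax (qresult S M) <= k.-1 & 1 <= k].
  move=> M /qmoves_mem [Mne Mu Mr].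
  case: M Mne Mu Mr => [|j M'] // _ _ Mr.
  have /andP [j1 jk] := Mr j (mem_head _ _).
  have jR := qresult_in kS (mem_head j M') jk.
  split; last by lia.
    by apply/eqP => e; rewrite e in jR.
  apply: qmax_le => y /qresultP [x [i [xS iM ix ->]]].
  have := ub x xS; have /andP [i1 _] := Mr i iM; lia.
have -> : sg (qgame_fuel f.+1 S) =
  mex (map sg [seq qgame_fuel f (qresult S M) | M <- qmoves S & allowedC S M]) by [].
rewrite -map_comp.
have -> : map (sg \o (fun M => qgame_fuel f (qresult S M))) [seq M <- qmoves S | allowedC S M]
    = map (fun M => v (qresult S M)) [seq M <- qmoves S | allowedC S M].
  apply/eq_in_map => M; rewrite mem_filter => /andP [_ hM] /=.
  have [h1 h2 h3] := Rfacts M hM.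
  apply: IH => //; [exact: qresult_uniq | lia].
have Sk : size S == 1 -> forall x, x \in S -> x = k.
  move=> s1 x xS; apply/eqP; apply: contraTT s1 => xk; exact: two_not1 xS kS xk.
apply: mex_eq.
- apply/mapP => -[M]; rewrite mem_filter => /andP [al hM] e.
  have [h1 h2 h3] := Rfacts M hM.
  have vR := v_le (qresult S M).
  move: e; rewrite {1}/v -/k; case: ifP => s1 e; first by lia.
  have [x xS xk] := other_elt k u ne (negbT s1).
  have [_ Mu Mr] := qmoves_mem hM.
  have [nR1 qR] : size (qresult S M) != 1 /\ 0 < qmax (qresult S M).
    move: al; rewrite /allowedC => /orP [hs|/andP [hs hall]].
      case: M hM Mu Mr hs {h1 h2 h3 vR e} => [|a [|b M']] // hM Mu Mr _.
      have /andP [a1 ak] := Mr a (mem_head _ _).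
      have /andP [b1 bk] : 1 <= b <= k by apply: Mr; rewrite !inE eqxx orbT.
      have ab : a != b by move: Mu => /= /andP []; rewrite inE negb_or => /andP [].
      apply: (two_elts (y1 := k - a) (y2 := k - b)).
      + exact: qresult_in kS (mem_head _ _) ak.
      + by apply: qresult_in kS _ bk; rewrite !inE eqxx orbT.
      + move: ab; lia.
    case: M hM Mu Mr hs hall {h1 h2 h3 vR e} => [|j [|b M']] // hM Mu Mr _ /allP hall.
    have /andP [j1 jk] := Mr j (mem_head _ _).
    have jx : j <= x := hall x xS; have xk' := ub x xS.
    apply: (two_elts (y1 := k - j) (y2 := x - j)).
    + exact: qresult_in kS (mem_head _ _) jk.
    + exact: qresult_in xS (mem_head _ _) jx.
    + move: xk; lia.
  move: e vR; rewrite /v (negbTE nR1); lia.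
- rewrite /v -/k; case: ifP => s1 m hm; apply/mapP.
  + have km : 1 <= k - m <= k by lia.
    have hk : k - m \in [:: k - m] by rewrite mem_head.
    exists [:: k - m].
      rewrite mem_filter; apply/andP; split.
        rewrite /allowedC /=; apply/allP => x /(Sk s1) ->; lia.
      by rewrite mem_filter /= mem_subseqs sub1seq mem_iota; lia.
    have -> : qresult S [:: k - m] = [:: m].
      apply: all_eq_single; first exact: qresult_uniq.
        by apply/eqP => e; have := qresult_in kS hk (leq_subr _ _); rewrite e.
      move=> y /qresultP [x [j [xS]]]; rewrite inE => /eqP -> _ ->.
      rewrite (Sk s1 x xS); lia.
    by rewrite /v /= maxn0.
  + have a1 : 1 <= k.-1 - m < k by lia.
    set a := k.-1 - m in a1 *.
    exists [:: a; k].
      rewrite mem_filter; apply/andP; split; first by [].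
      rewrite mem_filter /= mem_subseqs.
      have -> : iota 1 k = iota 1 k.-1 ++ [:: k].
        have hk : k = k.-1 + 1 by lia.
        rewrite {1}hk iotaD /=; congr (_ ++ [:: _]); lia.
      have -> : [:: a; k] = [:: a] ++ [:: k] by [].
      apply: cat_subseq => //; rewrite sub1seq mem_iota; lia.
    have aR : k - a \in qresult S [:: a; k] by apply: qresult_in kS _ _; rewrite ?mem_head //; lia.
    have kR : k - k \in qresult S [:: a; k] by apply: qresult_in kS _ _; rewrite ?inE ?eqxx ?orbT.
    have [nR1 _] := two_elts aR kR ltac:(lia).
    rewrite /v (negbTE nR1) (@qmax_eq _ (k - a)) //; first by lia.
    move=> y /qresultP [x [j [xS]]]; rewrite !inE => /orP [] /eqP -> _ ->;
      have := ub x xS; lia.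
Qed.

Theorem lemma4 (s : seq nat) :
  s != [::] -> uniq s ->
  game_equiv (qgameC s)
    (nim (if size s == 1 then qmax s else (qmax s).-1)).
Proof.
move=> ne u; apply: equiv_sg; rewrite sg_nim; exact: main.
Qed.
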